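(* Let $Y$ be a solid vector space, $(X,d)$ a cone metric space over $Y$, $D\subseteq X$ and $T\colon D\to X$. Suppose that for some $x_0\in D$ the Picard iteration $x_{n+1}=Tx_n$ ($n\ge0$) is well defined (i.e. $x_n\in D$ for all $n$) and converges to a point $\xi\in D$. Then each of the following conditions implies that $T\xi=\xi$: (F1) $T$ is continuous at $\xi$; (F2) $T$ has a closed graph, i.e. $\{(x,Tx):x\in D\}$ is closed in $D\times X$; (F3) for some semimonotone norm $\|\cdot\|$ on $Y$, the function $G(x)=\|d(x,Tx)\|$ is lower semicontinuous at $\xi$; (F4) there are real $\alpha,\beta\ge0$ with $d(\xi,T\xi)\preceq\alpha\,d(x,\xi)+\beta\,d(Tx,\xi)$ for each $x\in D$.
   Context: Vector space with convergence: a real vector space $Y$ with a relation $\to$ between sequences in $Y$ and points of $Y$ (uniqueness of limits not assumed) such that (C1) $x_n\to x$, $y_n\to y$ imply $x_n+y_n\to x+y$; (C2) $x_n\to x$, $\lambda\in\mathbb R$ imply $\lambda x_n\to\lambda x$; (C3) $\lambda_n\to\lambda$ in $\mathbb R$ imply $\lambda_n x\to\lambda x$. $A\subseteq Y$ is open if $x_n\to x\in A$ implies $x_n\in A$ for all but finitely many $n$; closed if $x_n\to x$, $x_n\in A$ $\forall n$ imply $x\in A$; $A^\circ$ is the union of all open subsets of $A$. A cone is a nonempty closed $K$ with $\lambda K\subseteq K$ ($\lambda\ge0$), $K+K\subseteq K$, $K\cap(-K)=\{0\}$; solid if $K\ne\{0\}$, $K^\circ\ne\emptyset$. A vector ordering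 is a partial order $\preceq$ with (V1) $x\preceq y\Rightarrow x+z\preceq y+z$; (V2) $\lambda\ge0$, $x\preceq y\Rightarrow\lambda x\preceq\lambda y$; (V3) $x_n\to x$, $y_n\to y$, $x_n\preceq y_n$ $\forall n\Rightarrow x\preceq y$. Solid vector space: positive cone $K=\{x:x\succeq0\}$ solid, with $x\prec y$ iff $y-x\in K^\circ$. A norm $\|\cdot\|$ on $Y$ is semimonotone if there is $C>0$ with $\|x\|\le C\|y\|$ whenever $0\preceq x\preceq y$. Cone metric space over $Y$: nonempty $X$ with $d\colon X\times X\to Y$, $d(x,y)\succeq0$, $d(x,y)=0$ iff $x=y$, $d(x,y)=d(y,x)$, $d(x,y)\preceq d(x,z)+d(z,y)$. $X$ carries the topology with basis $U(x,r)=\{y:d(y,x)\prec r\}$ ($r\succ0$); $x_n\to x$ iff for every $c\succ0$, $d(x_n,x)\prec c$ for all but finitely many $n$. Continuity and lower semicontinuity refer to this topology (restricted to $D$). *)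

(* Defs.v *)
From mathcomp Require Import all_boot all_order all_algebra.
From mathcomp Require Import reals.
Set Implicit Arguments. Unset Strict Implicit. Unset Printing Implicit Defensive.
Import Order.TTheory GRing.Theory Num.Theory.
Local Open Scope ring_scope.

Section VectorSpaceWithConvergence.
Variables (R : realType) (Y : lmodType R).
Variable conv : (nat -> Y) -> Y -> Prop.

Definition real_seq_conv (l : nat -> R) (a : R) : Prop :=
  forall e : R, 0 < e -> exists N : nat, forall n : nat, (N <= n)%N -> `|l n - a| < e.

Definition conv_axioms : Prop :=
  (forall (xs ys : nat -> Y) (x y : Y), conv xs x -> conv ys y ->
       conv (fun n => xs n + ys n) (x + y)) /\
  (forall (xs : nat -> Y) (x : Y) (a : R), conv xs x -> conv (fun n => a *: xs n) (a *: x)) /\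
  (forall (l : nat -> R) (a : R) (x : Y), real_seq_conv l a ->
       conv (fun n => l n *: x) (a *: x)).

Definition vopen (A : Y -> Prop) : Prop :=
  forall (xs : nat -> Y) (x : Y), conv xs x -> A x ->
    exists N : nat, forall n : nat, (N <= n)%N -> A (xs n).

Definition vclosed (A : Y -> Prop) : Prop :=
  forall (xs : nat -> Y) (x : Y), conv xs x -> (forall n, A (xs n)) -> A x.

Definition vinterior (A : Y -> Prop) (x : Y) : Prop :=
  exists U : Y -> Prop, vopen U /\ (forall y, U y -> A y) /\ U x.

Definition is_cone (K : Y -> Prop) : Prop :=
  (exists x, K x) /\ vclosed K /\
  (forall (a : R) (x : Y), 0 <= a -> K x -> K (a *: x)) /\
  (forall x y, K x -> K y -> K (x + y)) /\
  (forall x, K x -> K (- x) -> x = 0).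

Definition solid_cone (K : Y -> Prop) : Prop :=
  is_cone K /\ (exists x, K x /\ x <> 0) /\ (exists x, vinterior K x).

Definition vector_ordering (le : Y -> Y -> Prop) : Prop :=
  (forall x, le x x) /\ (forall x y, le x y -> le y x -> x = y) /\
  (forall x y z, le x y -> le y z -> le x z) /\
  (forall x y z, le x y -> le (x + z) (y + z)) /\
  (forall (a : R) x y, 0 <= a -> le x y -> le (a *: x) (a *: y)) /\
  (forall (xs ys : nat -> Y) (x y : Y), conv xs x -> conv ys y ->
       (forall n, le (xs n) (ys n)) -> le x y).

Definition pos_cone (le : Y -> Y -> Prop) : Y -> Prop := fun x => le 0 x.

Definition solid_space (le : Y -> Y -> Prop) : Prop :=
  vector_ordering le /\ solid_cone (pos_cone le).

Definition vlt (le : Y -> Y -> Prop) (x y : Y) : Prop := vinterior (pos_cone le) (y - x).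

Definition is_norm (N : Y -> R) : Prop :=
  (forall x, 0 <= N x) /\ (forall x, N x = 0 -> x = 0) /\
  (forall (a : R) x, N (a *: x) = `|a| * N x) /\
  (forall x y, N (x + y) <= N x + N y).

Definition semimonotone_norm (le : Y -> Y -> Prop) (N : Y -> R) : Prop :=
  is_norm N /\ exists C : R, 0 < C /\ forall x y, le 0 x -> le x y -> N x <= C * N y.

Section ConeMetric.
Variable le : Y -> Y -> Prop.
Variables (X : Type) (d : X -> X -> Y).

Definition cone_metric : Prop :=
  (forall x y, le 0 (d x y)) /\ (forall x y, d x y = 0 <-> x = y) /\
  (forall x y, d x y = d y x) /\ (forall x y z, le (d x y) (d x z + d z y)).

Definition cball (x : X) (r : Y) (y : X) : Prop := vlt le (d y x) r.

Definition copen (A : X -> Prop) : Prop :=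
  forall a, A a -> exists (x : X) (r : Y),
    vlt le 0 r /\ cball x r a /\ forall y, cball x r y -> A y.

Definition cconv (xs : nat -> X) (x : X) : Prop :=
  forall c : Y, vlt le 0 c -> exists N : nat, forall n : nat, (N <= n)%N -> vlt le (d (xs n) x) c.

Definition open_in (D : X -> Prop) (V : X -> Prop) : Prop :=
  exists O : X -> Prop, copen O /\ forall x, V x <-> (D x /\ O x).

Definition open_in_prod (D : X -> Prop) (P : X * X -> Prop) : Prop :=
  forall p, P p -> D p.1 /\
    exists (U V : X -> Prop), open_in D U /\ copen V /\ U p.1 /\ V p.2 /\
      forall q : X * X, U q.1 -> V q.2 -> P q.

Definition closed_in_prod (D : X -> Prop) (P : X * X -> Prop) : Prop :=
  open_in_prod D (fun p => D p.1 /\ ~ P p).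

Definition continuous_at_in (D : X -> Prop) (T : X -> X) (xi : X) : Prop :=
  forall O : X -> Prop, copen O -> O (T xi) ->
    exists W, open_in D W /\ W xi /\ forall x, W x -> O (T x).

Definition closed_graph (D : X -> Prop) (T : X -> X) : Prop :=
  closed_in_prod D (fun p => D p.1 /\ p.2 = T p.1).

Definition lsc_at_in (D : X -> Prop) (G : X -> R) (xi : X) : Prop :=
  forall t : R, t < G xi -> exists W, open_in D W /\ W xi /\ forall x, W x -> t < G x.

End ConeMetric.
End VectorSpaceWithConvergence.

(* Main.v *)
Require Import Defs.
From mathcomp Require Import all_boot all_order all_algebra.
From mathcomp Require Import reals.
From mathcomp Require Import ring lra.
From Stdlib Require Import Classical.
Set Implicit Arguments. Unset Strict Implicit.
Import Order.TTheory GRing.Theory Num.Theory.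
Local Open Scope ring_scope.

Section Aux.
Variables (R : realType) (Y : lmodType R) (conv : (nat -> Y) -> Y -> Prop)
  (le : Y -> Y -> Prop).
Hypothesis Hc : conv_axioms conv.
Hypothesis Hs : solid_space conv le.

Let K := pos_cone le.

Lemma le_trans' a b c : le a b -> le b c -> le a c.
Proof. by case: Hs => [[_ [_ [H _]]] _]; apply: H. Qed.

Lemma le_addr a b z : le a b -> le (a + z) (b + z).
Proof. by case: Hs => [[_ [_ [_ [H _]]]] _]; apply: H. Qed.

Lemma le_scale k a b : 0 <= k -> le a b -> le (k *: a) (k *: b).
Proof. by case: Hs => [[_ [_ [_ [_ [H _]]]]] _]; apply: H. Qed.

Lemma le_congr a b a' b' : a = a' -> b = b' -> le a b -> le a' b'.
Proof. by move=> -> ->. Qed.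

Lemma le_add a b c e : le a b -> le c e -> le (a + c) (b + e).
Proof.
move=> h1 h2; apply: (le_trans' (le_addr c h1)).
by rewrite (addrC b) (addrC b); apply: le_addr.
Qed.

Lemma le_add2 a b c : le a c -> le b c -> le (a + b) (2 *: c).
Proof. by move=> h1 h2; rewrite scaler_nat mulr2n; apply: le_add. Qed.

Lemma vint_le x : vinterior conv (pos_cone le) x -> le 0 x.
Proof. by case=> U [_ [h hx]]; apply: h. Qed.

Lemma vlt_le a b : vlt conv le a b -> le a b.
Proof.
move=> /vint_le h; have := le_addr a h; rewrite add0r subrK; exact.
Qed.

Lemma vint_scale l x : 0 < l -> vinterior conv (pos_cone le) x ->
  vinterior conv (pos_cone le) (l *: x).
Proof.
move=> lp [U [oU [sU Ux]]].
exists (fun y => U (l^-1 *: y)); split; [|split].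
- move=> ys y cy Uy.
  case: Hc => [_ [C2 _]].
  exact: (oU _ _ (C2 _ _ l^-1 cy) Uy).
- move=> y /sU Ky.
  have := le_scale (ltW lp) Ky.
  rewrite scaler0 scalerA mulfV ?scale1r // ?gt_eqF; exact.
- by rewrite scalerA mulVf ?scale1r // gt_eqF.
Qed.

Lemma vint_addK u v : le 0 u -> vinterior conv (pos_cone le) v ->
  vinterior conv (pos_cone le) (u + v).
Proof.
move=> Ku [U [oU [sU Uv]]].
exists (fun y => U (y - u)); split; [|split].
- move=> ys y cy Uy.
  case: Hc => [C1 [_ C3]].
  have cc : conv (fun _ => 1 *: (- u)) (1 *: (- u)).
    apply: C3 => e ep; exists 0%N => n _; by rewrite subrr normr0.
  have := oU _ _ (C1 _ _ _ _ cy cc); rewrite !scale1r; exact.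
- move=> y /sU Ky; have := le_add Ky Ku; move=> h; apply: (le_congr _ _ h); [exact: addr0 | exact: subrK].
- by rewrite (addrC u) addrK.
Qed.

Lemma vlt_trans_le a b c : le a b -> vlt conv le b c -> vlt conv le a c.
Proof.
move=> h1 h2; rewrite /vlt.
have -> : c - a = (b - a) + (c - b) by rewrite (addrC (b - a)) addrA subrK.
apply: vint_addK => //; have := le_addr (- a) h1; rewrite subrr; exact.
Qed.

Lemma real_conv_inv : real_seq_conv (fun n : nat => (n.+1%:R : R)^-1) 0.
Proof.
move=> e ep.
have ei : 0 <= e^-1 by rewrite invr_ge0 ltW.
exists (Num.Def.archi_bound e^-1) => n hn.
rewrite subr0 ger0_norm ?invr_ge0 ?ler0n //.
rewrite -[e]invrK ltf_pV2 ?posrE ?ltr0Sn ?invr_gt0 //.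
apply: (lt_le_trans (archi_boundP ei)).
rewrite ler_nat; exact: (leq_trans hn).
Qed.

Lemma zero_lemma a k : 0 <= k -> le 0 a ->
  (forall c, vlt conv le 0 c -> le a (k *: c)) -> a = 0.
Proof.
move=> k0 a0 H.
case: Hs => [[_ [anti [_ [_ [_ V3]]]]] [_ [_ [c0 Hc0]]]].
case: Hc => [_ [C2 C3]].
have h : le (1 *: a) (k *: (0 *: c0)).
  apply: (V3 (fun _ => 1 *: a) (fun n => k *: ((n.+1%:R : R)^-1 *: c0))).
  - apply: C3 => e ep; exists 0%N => n _; by rewrite subrr normr0.
  - apply: C2; apply: C3; exact: real_conv_inv.
  - move=> n; rewrite scale1r; apply: H; rewrite /vlt subr0.
    by apply: vint_scale => //; rewrite invr_gt0 ltr0Sn.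
by apply: anti => //; move: h; rewrite scale1r scale0r scaler0.
Qed.

Section Metric.
Variables (X : Type) (d : X -> X -> Y).
Hypothesis Hm : cone_metric le d.

Definition evconv (ys : nat -> X) (a : X) := forall c : Y, vlt conv le 0 c ->
  exists N : nat, forall n : nat, (N <= n)%N -> vlt conv le (d (ys n) a) c.

Lemma uniq_lim ys a b : evconv ys a -> evconv ys b -> a = b.
Proof.
move=> ha hb.
case: Hm => [d0 [dE [dS dT]]].
apply/dE; apply: (zero_lemma (k := 2)) => // c cp.
case: (ha c cp) => N1 h1; case: (hb c cp) => N2 h2.
pose n := (N1 + N2)%N.
have := h1 n (leq_addr _ _); have := h2 n (leq_addl _ _).
move=> /vlt_le l2 /vlt_le l1.
apply: (le_trans' (dT a b (ys n))); rewrite dS.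
by rewrite scaler_nat mulr2n; apply: le_add.
Qed.

Lemma ev_copen O xs xi : copen conv le d O -> O xi -> cconv conv le d xs xi ->
  exists N, forall n, (N <= n)%N -> O (xs n).
Proof.
move=> oO Oxi cx.
case: Hm => [d0 [dE [dS dT]]].
case: (oO _ Oxi) => z [r [rp [bx sb]]].
have ep : vlt conv le 0 (r - d xi z) by rewrite /vlt subr0.
case: (cx _ ep) => N hN; exists N => n hn; apply: sb.
rewrite /cball; apply: (vlt_trans_le (dT _ _ xi)).
have := hN n hn; rewrite /vlt.
by rewrite opprD addrA addrAC.
Qed.

Lemma ev_open_in D W xs xi : open_in conv le d D W -> W xi ->
  cconv conv le d xs xi -> (forall n, D (xs n)) ->
  exists N, forall n, (N <= n)%N -> W (xs n).
Proof.
move=> [O [oO hW]] Wxi cx Dx.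
case/hW: Wxi => _ Oxi.
case: (ev_copen oO Oxi cx) => N hN; exists N => n hn.
by apply/hW; split; [exact: Dx | exact: hN].
Qed.

End Metric.
End Aux.

Theorem proposition10p1 (R : realType) (Y : lmodType R)
  (conv : (nat -> Y) -> Y -> Prop) (le : Y -> Y -> Prop)
  (X : Type) (d : X -> X -> Y) (D : X -> Prop) (T : X -> X)
  (x0 xi : X) (xs : nat -> X) :
  conv_axioms conv -> solid_space conv le -> cone_metric le d ->
  D x0 -> xs 0%N = x0 -> (forall n : nat, xs n.+1 = T (xs n)) ->
  (forall n : nat, D (xs n)) -> D xi -> cconv conv le d xs xi ->
  (* (F1) *)
  (continuous_at_in conv le d D T xi -> T xi = xi) /\
  (* (F2) *)
  (closed_graph conv le d D T -> T xi = xi) /\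
  (* (F3) *)
  ((exists N : Y -> R, semimonotone_norm le N /\
      lsc_at_in conv le d D (fun x => N (d x (T x))) xi) -> T xi = xi) /\
  (* (F4) *)
  ((exists alpha beta : R, 0 <= alpha /\ 0 <= beta /\
      forall x, D x -> le (d xi (T xi)) (alpha *: d x xi + beta *: d (T x) xi)) ->
     T xi = xi).
Proof.
move=> Hc Hs Hm Dx0 e0 eS Dx Dxi cx.
have Hm' := Hm; case: Hm' => [d0 [dE [dS dT]]].
have dxx : forall x, d x x = 0 by move=> x; apply/dE.
have shift : evconv conv le d (fun n => xs n.+1) xi.
  move=> c cp; case: (cx c cp) => N hN; exists N => n hn; apply: hN.
  exact: (leq_trans hn).
split; [|split; [|split]].
-
  move=> Hcont.
  apply: ((uniq_lim Hc Hs Hm (ys := fun n => xs n.+1))) => // c cp.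
  have oO : copen conv le d (cball conv le d (T xi) c).
    by move=> a ha; exists (T xi), c.
  have hO : cball conv le d (T xi) c (T xi) by rewrite /cball dxx.
  case: (Hcont _ oO hO) => W [oW [Wxi hW]].
  case: (ev_open_in Hc Hs Hm oW Wxi cx Dx) => N hN; exists N => n hn.
  rewrite eS; exact: (hW _ (hN n hn)).
-
  move=> Hg; apply: NNPP => hne.
  have hp : D (xi, xi).1 /\ ~ (D (xi, xi).1 /\ (xi, xi).2 = T (xi, xi).1).
    by split => //= -[_ h]; apply: hne.
  case: (Hg _ hp) => _ [U [V [oU [oV [Uxi [Vxi hUV]]]]]].
  case: (ev_open_in Hc Hs Hm oU Uxi cx Dx) => N1 h1.
  case: (ev_copen Hc Hs Hm oV Vxi cx) => N2 h2.
  pose n := (N1 + N2)%N.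
  have := hUV (xs n, xs n.+1) (h1 n (leq_addr _ _)) (h2 n.+1 _).
  rewrite leqW ?leq_addl //= => /(_ isT) [_]; apply; split => //.
-
  move=> [Nm [[[N0 [N1 [NZ NT]]] [C [Cp HC]]] Hl]].
  apply: NNPP => hne.
  set a := d xi (T xi).
  have a0 : a <> 0 by move/dE => h; apply: hne; exact: esym h.
  have Nap : 0 < Nm a by rewrite lt_def N0 andbT; apply/eqP => /N1; exact: a0.
  set t := Nm a / 2.
  have tp : 0 < t by rewrite /t; lra.
  have tl : t < Nm a by rewrite /t; lra.
  case: (Hl t tl) => W [oW [Wxi hW]].
  case: (ev_open_in Hc Hs Hm oW Wxi cx Dx) => N2 h2.
  have [_ [_ [_ [c0 Hc0]]]] := Hs.
  set M := Nm c0.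
  set l := t / (2 * C * M + 1).
  have den : 0 < 2 * C * M + 1.
    have : 0 <= M by exact: N0.
    move=> M0; have : 0 <= 2 * C * M by rewrite !mulr_ge0 // ltW.
    lra.
  have lp : 0 < l by rewrite divr_gt0.
  have hl : l * (2 * C * M + 1) = t by rewrite /l mulfVK // gt_eqF.
  have cp : vlt conv le 0 (l *: c0).
    rewrite /vlt subr0; exact: (vint_scale Hc Hs lp Hc0).
  case: (cx _ cp) => N3 h3.
  pose n := (N2 + N3)%N.
  have := hW _ (h2 n (leq_addr _ _)).
  rewrite /= -eS => ht.
  have l1 := vlt_le Hs (h3 n (leq_addl _ _)).
  have l2 := vlt_le Hs (h3 n.+1 (leqW (leq_addl _ _))).
  have hle : le (d (xs n) (xs n.+1)) (2 *: (l *: c0)).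
    apply: (le_trans' Hs (dT _ _ xi)).
    rewrite (dS xi); exact: (le_add2 Hs l1 l2).
  have := HC _ _ (d0 _ _) hle.
  rewrite !NZ (ger0_norm (ltW lp)) ger0_norm // => hb.
  have M0 : 0 <= M by exact: N0.
  have : C * (2 * (l * M)) < t by nra.
  move: ht hb; rewrite -/M; lra.
-
  move=> [al [be [al0 [be0 H]]]].
  apply/esym/dE; apply: (zero_lemma Hc Hs (k := al + be)) => //.
    by rewrite addr_ge0.
  move=> c cp; case: (cx c cp) => N hN.
  apply: (le_trans' Hs (H _ (Dx N))).
  rewrite scalerDl -eS; apply: (le_add Hs); apply: (le_scale Hs) => //.
    exact: (vlt_le Hs (hN N (leqnn _))).
  exact: (vlt_le Hs (hN N.+1 (leqnSn _))).
Qed.
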